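(* Let $\omega=\{\omega_n\}_{n\ge 0}$ be a valid weight, let $a\in\mathbb{C}\setminus\{0\}$, and let $V_a=M_{a-z}^*M_{a-z}$ act on $H^2_\omega$. For each $\lambda\in\sigma_{\mathrm p}(V_a)$, every associated eigenfunction $h(z)=\sum_{n\ge0}h_nz^n\in H^2_\omega$ (i.e. $h\neq 0$ with $V_ah=\lambda h$) has Taylor coefficients satisfying \[ |a|^2h_n - a h_{n+1}\frac{\omega_{n+1}}{\omega_n} - \overline{a}\,h_{n-1} + h_n\frac{\omega_{n+1}}{\omega_n}=\lambda h_n\qquad\text{for each } n\ge 0, \] with the convention $h_{-1}=0$; this recurrence relation has a unique solution up to normalization (i.e. up to multiplication by a scalar), and the eigenfunction is given by it.
   Context: A weight $\omega=\{\omega_n\}_{n\ge0}$ is called valid if it is a monotonic sequence of positive numbers with $\omega_0=1$, $\lim_{n\to\infty}\omega_{n+1}/\omega_n=1$ and $\sum_{n=0}^\infty(1-\omega_{n+1}/\omega_n)^2<\infty$. The weighted Hardy space $H^2_\omega$ is the Hilbert space of holomorphic functions $f(z)=\sum_{n\ge0}a_nz^n$ on the unit disc $\mathbb{D}$ with $\|f\|_\omega^2=\sum_{n\ge0}|a_n|^2\omega_n<\infty$, with inner product $\langle f,g\rangle=\sum_n a_n\overline{b_n}\omega_n$. For a polynomial $\varphi$, $M_\varphi$ denotes the (bounded) operator of multiplication by $\varphi$ on $H^2_\omega$ and $M_\varphi^*$ its Hilbert space adjoint. $\sigma_{\mathrm p}$ denotes the point spectrum (set of eigenvalues). *)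

(* Defs.v *)
From HB Require Import structures.
From mathcomp Require Import all_boot all_order all_algebra.
From mathcomp Require Import all_classical all_reals all_analysis.
From mathcomp Require Export complex.
Import Order.TTheory GRing.Theory Num.Theory numFieldNormedType.Exports.

Set Implicit Arguments.
Unset Strict Implicit.
Unset Printing Implicit Defensive.

Local Open Scope ring_scope.
Local Open Scope complex_scope.
Local Open Scope classical_set_scope.

Section WeightedHardy.
Variable R : realType.

Definition valid_weight (w : nat -> R) : Prop :=
  [/\ (forall n, 0 < w n), w 0%N = 1,
      nondecreasing_seq w \/ nonincreasing_seq w,
      (fun n => w n.+1 / w n) @ \oo --> (1 : R) &
      cvgn (series (fun n => (1 - w n.+1 / w n) ^+ 2))].

(* Elements of H^2_w are identified with their Taylor coefficient
   sequences f : nat -> R[i];  f \in H^2_w iff sum |f_n|^2 w_n < oo. *)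
Definition in_H2 (w : nat -> R) (f : nat -> R[i]) : Prop :=
  cvgn (series (fun n => (Normc.normc (f n)) ^+ 2 * w n)).

Definition ip_term (w : nat -> R) (f g : nat -> R[i]) (n : nat) : R[i] :=
  f n * (g n)^* * (w n)%:C.

(* <f, g> = sum_n f_n conj(g_n) w_n, the (absolutely convergent, for
   f, g in H^2_w) complex series being summed via its real and
   imaginary parts. *)
Definition ip (w : nat -> R) (f g : nat -> R[i]) : R[i] :=
  Complex (limn (series (fun n => complex.Re (ip_term w f g n))))
          (limn (series (fun n => complex.Im (ip_term w f g n)))).

Definition prevc (f : nat -> R[i]) (n : nat) : R[i] :=
  if n is k.+1 then f k else 0.

Definition Mul_a_minus_z (a : R[i]) (f : nat -> R[i]) : nat -> R[i] :=
  fun n => a * f n - prevc f n.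

Definition is_adjoint (w : nat -> R) (T T' : (nat -> R[i]) -> (nat -> R[i]))
  : Prop :=
  (forall g, in_H2 w g -> in_H2 w (T' g)) /\
  (forall f g, in_H2 w f -> in_H2 w g -> ip w (T f) g = ip w f (T' g)).

Definition eigen_recurrence (w : nat -> R) (a lam : R[i]) (h : nat -> R[i])
  : Prop :=
  forall n : nat,
    `|a| ^+ 2 * h n - a * h n.+1 * (w n.+1 / w n)%:C - a^* * prevc h n
      + h n * (w n.+1 / w n)%:C = lam * h n.

End WeightedHardy.

(* Main.v *)
Require Import Defs.
From HB Require Import structures.
From mathcomp Require Import all_boot all_order all_algebra.
From mathcomp Require Import zify ring lra.
From mathcomp Require Import all_classical all_reals all_analysis.
From mathcomp Require Import complex.
Import Order.TTheory GRing.Theory Num.Theory numFieldNormedType.Exports.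
Local Open Scope ring_scope.
Local Open Scope complex_scope.


Lemma series2_eq (R : realType) (u : nat -> R) n :
  (forall m, m <> n -> m <> n.+1 -> u m = 0) ->
  forall k, (n.+2 <= k)%N -> series u k = u n + u n.+1.
Proof.
move=> H.
have H0 : forall j, (j <= n)%N -> series u j = 0.
  elim=> [|j IH] Hj; first by rewrite /series /= big_geq.
  rewrite seriesSr IH ?(ltnW Hj) // H ?addr0 //; lia.
move=> k Hk; rewrite -(subnK Hk); elim: (k - n.+2)%N => [|j IH].
  by rewrite add0n !seriesSr H0 // add0r.
rewrite addSn seriesSr IH (H (j + n.+2)%N) ?addr0 //; lia.
Qed.

Lemma series2_cvg (R : realType) (u : nat -> R) n :
  (forall m, m <> n -> m <> n.+1 -> u m = 0) ->
  (series u @ \oo --> (u n + u n.+1))%classic.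
Proof.
move=> H; apply: cvg_near_cst.
by apply: filterS (nbhs_infty_ge n.+2) => k; apply: series2_eq.
Qed.

Lemma series2_lim (R : realType) (u : nat -> R) n :
  (forall m, m <> n -> m <> n.+1 -> u m = 0) ->
  limn (series u) = u n + u n.+1.
Proof. by move=> H; apply: cvg_lim => //; apply: series2_cvg. Qed.

Lemma series2_is_cvg (R : realType) (u : nat -> R) n :
  (forall m, m <> n -> m <> n.+1 -> u m = 0) ->
  cvgn (series u).
Proof. by move=> H; apply: cvgP; apply: series2_cvg H. Qed.

Lemma ip2 (R : realType) w (f g : nat -> R[i]) n :
  (forall m, m <> n -> m <> n.+1 -> ip_term w f g m = 0) ->
  ip w f g = ip_term w f g n + ip_term w f g n.+1.
Proof.
move=> H; rewrite /ip !(@series2_lim _ _ n).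
- by case: (ip_term w f g n) => ? ?; case: (ip_term w f g n.+1).
- by move=> m H1 H2; rewrite H.
- by move=> m H1 H2; rewrite H.
Qed.


Lemma normc_ge0 {R : realType} (x : R[i]) : 0 <= Normc.normc x.
Proof. by case: x => ? ?; rewrite /Normc.normc sqrtr_ge0. Qed.

Lemma normc_sub_sq {R : realType} (x y : R[i]) :
  Normc.normc (x - y) ^+ 2 <= 2 * Normc.normc x ^+ 2 + 2 * Normc.normc y ^+ 2.
Proof.
have h1 := le_normcD x (- y); rewrite normcN in h1.
have h2 := normc_ge0 (x - y); have h3 := normc_ge0 x; have h4 := normc_ge0 y.
set X := Normc.normc x in h1 h3 *; set Y := Normc.normc y in h1 h4 *.
set Z := Normc.normc (x - y) in h1 h2 *.
have : Z ^+ 2 <= (X + Y) ^+ 2 by rewrite ler_sqr // ?nnegrE ?addr_ge0.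
move=> h5; apply: le_trans h5 _.
have : 0 <= (X - Y) ^+ 2 by apply: sqr_ge0.
by rewrite !expr2 => h; rewrite -subr_ge0; apply: le_trans h _; rewrite le_eqVlt; apply/orP; left; apply/eqP; ring.
Qed.

Lemma ratio_bound {R : realType} (w : nat -> R) :
  valid_weight w -> exists C, 0 <= C /\ forall n, w n.+1 <= C * w n.
Proof.
case=> wpos _ _ cv _.
have /cvg_seq_bounded/bounded_fun_has_ubound [M HM] : cvgn (fun n => w n.+1 / w n).
  by apply: cvgP cv.
exists M; split.
  apply: le_trans (HM _ (ex_intro2 _ _ 0%N I erefl)) => /=.
  by rewrite divr_ge0 // ltW.
move=> n; have := HM _ (ex_intro2 _ _ n I erefl) => /=.
by rewrite ler_pdivrMr.
Qed.


Lemma M_H2 (R : realType) (w : nat -> R) (a : R[i]) (h : nat -> R[i]) :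
  valid_weight w -> in_H2 w h -> in_H2 w (Mul_a_minus_z a h).
Proof.
move=> vw hh; have [C [C0 HC]] := ratio_bound _ vw.
have wpos : forall n, 0 < w n by case: vw.
pose x n := Normc.normc (h n) ^+ 2 * w n.
pose p n := if n is k.+1 then x k else 0.
have xge0 : forall n, 0 <= x n by move=> n; rewrite mulr_ge0 ?sqr_ge0 // ltW.
have pge0 : forall n, 0 <= p n by case.
have cp : cvgn (series p).
  apply: (cvgP (limn (series x))); rewrite -cvg_shiftS.
  have -> : [sequence series p n.+1]_n = series x.
    apply/funext => k /=; rewrite /series /= big_nat_recl // /= add0r.
    by [].
  exact: hh.
pose K := Normc.normc a ^+ 2.
apply: (@series_le_cvg _ _ (((2 * K) *: x) + ((2 * C) *: p))).
- by move=> n; rewrite mulr_ge0 ?sqr_ge0 // ltW.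
- by move=> n /=; rewrite addr_ge0 // mulr_ge0 // mulr_ge0 // ?sqr_ge0.
- move=> n /=; rewrite /Mul_a_minus_z.
  have nM : forall u v : R[i], Normc.normc (u * v) = Normc.normc u * Normc.normc v by exact: Normc.normcM.
  have Kge0 : 0 <= K by rewrite sqr_ge0.
  have -> : (((2 * K) *: x + (2 * C) *: p) n) = 2 * K * x n + 2 * C * p n by [].
  case: n => [|k] /=.
    rewrite subr0 nM exprMn /x /= mulr0 addr0 -/K.
    have t0 : 0 <= K * (Normc.normc (h 0%N) ^+ 2 * w 0%N) by rewrite mulr_ge0 // mulr_ge0 ?sqr_ge0 // ltW.
    lra.
  apply: (@le_trans _ _ ((2 * Normc.normc (a * h k.+1) ^+ 2 + 2 * Normc.normc (h k) ^+ 2) * w k.+1)).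
    by rewrite ler_wpM2r ?normc_sub_sq // ltW.
  rewrite nM exprMn mulrDl /x -/K.
  have t0 : 0 <= Normc.normc (h k) ^+ 2 by rewrite sqr_ge0.
  have t1 : Normc.normc (h k) ^+ 2 * w k.+1 <= Normc.normc (h k) ^+ 2 * (C * w k) by rewrite ler_wpM2l.
  lra.
- by apply: is_cvg_seriesD; apply: is_cvg_seriesZ.
Qed.


Lemma rC_neq0 {R : realType} (x : R) : 0 < x -> x%:C != 0.
Proof. by move=> xp; apply/negP => /eqP [] /eqP; rewrite gt_eqF. Qed.

Lemma rec_step {R : realType} (w : nat -> R) a lam d n :
  (forall n, 0 < w n) -> a != 0 -> eigen_recurrence w a lam d ->
  d n = 0 -> prevc d n = 0 -> d n.+1 = 0.
Proof.
move=> wp a0 E dn pn; have := E n; rewrite dn pn !mulr0 !mul0r addr0 subr0 sub0r.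
move/eqP; rewrite oppr_eq0 !mulf_eq0 (negbTE a0) /= orbC.
have : (w n.+1 / w n)%:C != 0 by apply: rC_neq0; rewrite divr_gt0.
by move/negbTE => ->; move/eqP.
Qed.

Lemma rec_zero {R : realType} (w : nat -> R) a lam d :
  (forall n, 0 < w n) -> a != 0 -> eigen_recurrence w a lam d ->
  d 0%N = 0 -> forall n, d n = 0.
Proof.
move=> wp a0 E d0.
suff H : forall n, d n = 0 /\ d n.+1 = 0 by move=> n; case: (H n).
elim=> [|n [IH1 IH2]].
  by split => //; exact: (rec_step _ _ _ _ 0%N wp a0 E d0 erefl).
by split => //; exact: (rec_step _ _ _ _ n.+1 wp a0 E IH2 IH1).
Qed.


Definition edelta {R : realType} (n : nat) : nat -> R[i] :=
  fun m => if m == n then 1 else 0.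

Lemma adj_formula {R : realType} (w : nat -> R) a Madj g n :
  (forall n, 0 < w n) ->
  is_adjoint w (Mul_a_minus_z a) Madj -> in_H2 w g ->
  Madj g n = a^* * g n - g n.+1 * (w n.+1 / w n)%:C.
Proof.
move=> wp [_ adj] hg.
have he : in_H2 w (edelta n).
  apply: (series2_is_cvg _ _ n) => m H1 H2.
  by rewrite /edelta; case: eqP => // _; rewrite Normc.normc0 expr0n /= mul0r.
have := adj _ _ he hg.
rewrite (ip2 _ _ _ _ n); last first.
  move=> m H1 H2; rewrite /ip_term /Mul_a_minus_z /edelta.
  case: eqP => // _; rewrite mulr0 sub0r.
  case: m H1 H2 => [|m] H1 H2 /=; first by rewrite !(mul0r, mulNr, oppr0).
  case: eqP => E; last by rewrite !(mul0r, mulNr, oppr0).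
  by subst; case: H2.
rewrite (ip2 _ _ _ _ n); last first.
  by move=> m H1 H2; rewrite /ip_term /edelta; case: eqP => // _; rewrite !mul0r.
rewrite /ip_term /Mul_a_minus_z /edelta /= eqxx.
have -> : (n.+1 == n) = false by apply/negbTE; rewrite neq_ltn ltnSn orbT.
have -> : prevc (fun m => if m == n then (1 : R[i]) else 0) n = 0.
  by case: n {he} => [|n] //=; case: eqP => // E; lia.
rewrite !(mulr1, subr0, mulr0, sub0r, mul1r, mul0r, addr0) => E.
have cj : forall z : R[i], z^*%R = z^* by [].
rewrite !cj in E.
have E' := congr1 conjc E.
rewrite !(rmorphD, rmorphM, rmorphN, rmorph1) /= !conjcK in E'.
have cr : forall x : R, (x -i* 0) = x%:C by move=> x; rewrite oppr0.
rewrite !cr in E'.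
have W0 := @rC_neq0 _ _ (wp n).
apply: (mulIf W0); rewrite -E' rmorphM fmorphV /=.
by field.
Qed.

Theorem lemma3p1 (R : realType) (w : nat -> R) (a : R[i])
  (Madj : (nat -> R[i]) -> (nat -> R[i])) (lam : R[i]) (h : nat -> R[i]) :
  valid_weight w -> a != 0 ->
  is_adjoint w (Mul_a_minus_z a) Madj ->
  in_H2 w h -> (exists n, h n != 0) ->
  (forall n, Madj (Mul_a_minus_z a h) n = lam * h n) ->
  eigen_recurrence w a lam h /\
  (forall k : nat -> R[i], eigen_recurrence w a lam k ->
     exists c : R[i], forall n, k n = c * h n).
Proof.
move=> vw a0 adj hh [n0 hn0] eig.
have wp : forall n, 0 < w n by case: vw.
have Eh : eigen_recurrence w a lam h.
  move=> n; rewrite -eig (adj_formula _ _ _ _ _ wp adj (M_H2 _ _ a _ vw hh)).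
  have cj : forall z : R[i], z^*%R = z^* by [].
  rewrite /Mul_a_minus_z sqr_normc ?cj /=; ring.
split => // k Ek.
have h00 : h 0%N != 0.
  apply/negP => /eqP h00; move/negP: hn0; apply.
  by apply/eqP; apply: (rec_zero _ _ _ _ wp a0 Eh h00).
exists (k 0%N / h 0%N).
set c := k 0%N / h 0%N.
pose d n := k n - c * h n.
have Ed : eigen_recurrence w a lam d.
  move=> n; have E1 := Ek n; have E2 := Eh n.
  have -> : prevc d n = prevc k n - c * prevc h n.
    by case: n {E1 E2} => [|n] /=; rewrite ?mulr0 ?subr0.
  rewrite /d.
  transitivity ((`|a| ^+ 2 * k n - a * k n.+1 * (w n.+1 / w n)%:C - a^* * prevc k n
      + k n * (w n.+1 / w n)%:C) - c * (`|a| ^+ 2 * h n - a * h n.+1 * (w n.+1 / w n)%:C - a^* * prevc h n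
      + h n * (w n.+1 / w n)%:C)); first by ring.
  by rewrite E1 E2; ring.
have d0 : d 0%N = 0 by rewrite /d /c divfK // subrr.
move=> n; apply/eqP; rewrite -subr_eq0; apply/eqP.
exact: (rec_zero _ _ _ _ wp a0 Ed d0).
Qed.
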